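(* For every finite simple graph $G$, $\operatorname{box}(G) \le \operatorname{tw}(G) + 2$.
   Context: An axis-parallel $b$-dimensional box is a Cartesian product $R_1\times\cdots\times R_b$ of closed real intervals $R_i=[a_i,b_i]$. The boxicity $\operatorname{box}(G)$ of a graph $G$ is the minimum $b$ such that $G$ is the intersection graph of a family of axis-parallel $b$-dimensional boxes (one box per vertex, two distinct vertices adjacent iff their boxes intersect). A tree decomposition of $G=(V,E)$ is a pair $(\{X_i : i\in I\},T)$ with $T$ a tree on node set $I$ and $X_i\subseteq V$, such that $\bigcup_i X_i=V$, every edge has both endpoints in some $X_i$, and whenever $j$ lies on the path in $T$ from $i$ to $k$ we have $X_i\cap X_k\subseteq X_j$. Its width is $\max_i |X_i|-1$, and the treewidth $\operatorname{tw}(G)$ is the minimum width of a tree decomposition of $G$. *)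

(* Defs.v *)
From mathcomp Require Import all_boot all_order all_algebra.
From Stdlib Require Rdefinitions.
Set Implicit Arguments. Unset Strict Implicit. Unset Printing Implicit Defensive.

Definition simple_graph (T : finType) (e : rel T) : Prop :=
  symmetric e /\ irreflexive e.

Definition box_rep (T : finType) (e : rel T) (b : nat) : Prop :=
  exists (lo hi : T -> 'I_b -> Rdefinitions.R),
    (forall v i, Rdefinitions.Rle (lo v i) (hi v i)) /\
    (forall u v, u <> v ->
       (e u v <-> forall i, Rdefinitions.Rle (lo u i) (hi v i) /\ Rdefinitions.Rle (lo v i) (hi u i))).

Definition is_boxicity (T : finType) (e : rel T) (k : nat) : Prop :=
  box_rep e k /\ forall b, box_rep e b -> (k <= b)%N.

Definition acyclic (I : finType) (t : rel I) : Prop :=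
  forall (x : I) (p : seq I),
    (2 <= size p)%N -> uniq (x :: p) -> path t x p -> ~~ t (last x p) x.

Definition is_tree (I : finType) (t : rel I) : Prop :=
  (0 < #|I|)%N /\ symmetric t /\ irreflexive t /\
  (forall i j : I, connect t i j) /\ acyclic t.

Definition on_tree_path (I : finType) (t : rel I) (i j k : I) : Prop :=
  exists p : seq I, [/\ path t i p, last i p = k, uniq (i :: p) & j \in i :: p].

Definition tree_decomposition (T : finType) (e : rel T)
    (I : finType) (t : rel I) (X : I -> {set T}) : Prop :=
  [/\ is_tree t,
      (forall v : T, exists i, v \in X i),
      (forall u v : T, e u v -> exists i, (u \in X i) && (v \in X i))
    & (forall i j k : I, on_tree_path t i j k -> X i :&: X k \subset X j)].

Definition td_width (T : finType) (I : finType) (X : I -> {set T}) : int :=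
  (Posz (\max_(i : I) #|X i|) - 1)%R.

Definition is_treewidth (T : finType) (e : rel T) (k : int) : Prop :=
  (exists (I : finType) (t : rel I) (X : I -> {set T}),
      tree_decomposition e t X /\ td_width X = k) /\
  (forall (I : finType) (t : rel I) (X : I -> {set T}),
      tree_decomposition e t X -> (k <= td_width X)%R).

(* Main.v *)
From Stdlib Require Import Reals Lra Classical.
Require Import Defs.
From mathcomp Require Import all_boot all_order all_algebra.
From mathcomp Require Import zify.
Set Implicit Arguments. Unset Strict Implicit. Unset Printing Implicit Defensive.

Section Rooted.
Variables (I : finType) (t : rel I) (r : I).
Hypothesis tsym : symmetric t.
Hypothesis tconn : forall x, connect t r x.

Definition dpred x n := [exists p : n.-tuple I, path t r p && (last r p == x)].

Lemma dex x : exists n, dpred x n.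
Proof.
have /connectP [p pp ->] := tconn x.
exists (size p); apply/existsP; exists (in_tuple p) => /=; by rewrite pp eqxx.
Qed.

Definition depth x := ex_minn (dex x).

Lemma depthP x : dpred x (depth x).
Proof. by rewrite /depth; case: ex_minnP. Qed.

Lemma depth_min x n : dpred x n -> depth x <= n.
Proof. by rewrite /depth; case: ex_minnP => m _ H /H. Qed.

Lemma depth_r : depth r = 0.
Proof.
apply/eqP; rewrite -leqn0; apply: depth_min; apply/existsP.
by exists (in_tuple [::]) => /=; rewrite eqxx.
Qed.

Lemma depth0 x : depth x = 0 -> x = r.
Proof.
move=> H; have := depthP x; rewrite H => /existsP [p /andP [_ /eqP <-]].
by rewrite tuple0.
Qed.

Lemma depth_step x y : t x y -> depth y <= (depth x).+1.
Proof.
move=> txy; apply: depth_min; have /existsP [p /andP [pp /eqP lp]] := depthP x.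
apply/existsP; exists (Tuple (rcons_tupleP p y)) => /=.
by rewrite rcons_path pp lp txy last_rcons eqxx.
Qed.

Lemma par_ex x : 0 < depth x -> exists y, t y x && (depth y < depth x).
Proof.
move=> H; have /existsP [p /andP [pp /eqP lp]] := depthP x.
case: p pp lp => /= s; case/lastP: s => [|q z] sz pp lp.
  by move: sz H; rewrite /= => /eqP <-.
exists (last r q); move: pp; rewrite rcons_path => /andP [pq tq].
move: lp; rewrite last_rcons => zx; subst z; rewrite tq /=.
move: sz; rewrite size_rcons => /eqP sz.
apply: (@leq_trans (size q).+1); last by rewrite sz.
rewrite ltnS; apply: depth_min; apply/existsP; exists (in_tuple q) => /=.
by rewrite pq eqxx.
Qed.

Definition par x := odflt x [pick y | t y x && (depth y < depth x)].

Lemma par_spec x : 0 < depth x -> t (par x) x /\ depth (par x) = (depth x).-1.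
Proof.
move=> H; rewrite /par; case: pickP => [y /andP [ty dy] | none] /=.
  split => //; have := depth_step ty; move: dy; case: (depth x) => // n.
  rewrite !ltnS /= => a b; apply/eqP; by rewrite eqn_leq a b.
by have [y] := par_ex H; rewrite none.
Qed.

Lemma par_t x : 0 < depth x -> t (par x) x.
Proof. by case/par_spec. Qed.

Lemma par0 x : depth x = 0 -> par x = x.
Proof.
move=> H; rewrite /par; case: pickP => [y /andP [_]|] //=; by rewrite H.
Qed.

Lemma depth_par x : depth (par x) = (depth x).-1.
Proof.
case: (posnP (depth x)) => [H|H]; first by rewrite par0 // H.
by case: (par_spec H).
Qed.

Lemma depth_iter n x : depth (iter n par x) = depth x - n.
Proof.
elim: n => [|n IH] /=; first by rewrite subn0.
by rewrite depth_par IH subnS.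
Qed.

Definition anc y x := (depth y <= depth x) && (iter (depth x - depth y) par x == y).

Lemma ancP y x : reflect (exists n, iter n par x = y) (anc y x).
Proof.
apply: (iffP andP) => [[_ /eqP <-]|[n <-]]; first by eexists.
rewrite depth_iter leq_subr; split => //.
case: (leqP n (depth x)) => H; first by rewrite subKn.
have -> : depth x - (depth x - n) = depth x by rewrite (eqP (ltnW (_ : depth x < n))) // subn0.
have E : forall m, iter m par (iter (depth x) par x) = iter (depth x) par x.
  elim=> // m IH; rewrite iterS IH par0 //; by rewrite depth_iter subnn.
by rewrite -(subnK (ltnW H)) iterD E.
Qed.

Lemma anc_refl x : anc x x.
Proof. by apply/ancP; exists 0. Qed.

Lemma anc_par x : anc (par x) x.
Proof. by apply/ancP; exists 1. Qed.

Lemma anc_trans x y z : anc x y -> anc y z -> anc x z.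
Proof.
move=> /ancP [n <-] /ancP [m <-]; apply/ancP; exists (n + m); by rewrite iterD.
Qed.

Lemma anc_depth y x : anc y x -> depth y <= depth x.
Proof. by case/andP. Qed.

Lemma anc_eq y x : anc y x -> depth x <= depth y -> y = x.
Proof.
move=> /andP [a /eqP e] b; have E : depth x - depth y = 0.
  by apply/eqP; rewrite subn_eq0.
by rewrite -e E.
Qed.

Lemma anc_antisym x y : anc x y -> anc y x -> x = y.
Proof. move=> a b; apply: anc_eq a (anc_depth b). Qed.

Lemma anc_chain y z x : anc y x -> anc z x -> depth y <= depth z -> anc y z.
Proof.
move=> /andP [a /eqP ey] /andP [b /eqP ez] c; apply/andP; split => //.
apply/eqP; rewrite -[in X in iter _ _ X = _]ez -iterD -[in RHS]ey; congr iter.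
lia.
Qed.

Lemma anc_cmp y z x : anc y x -> anc z x -> anc y z || anc z y.
Proof.
move=> a b; case: (leqP (depth y) (depth z)) => H.
  by rewrite (anc_chain a b H).
by rewrite (anc_chain b a (ltnW H)) orbT.
Qed.

Lemma anc_r x : anc r x.
Proof.
apply/ancP; exists (depth x); apply: depth0; by rewrite depth_iter subnn.
Qed.

Lemma anc_strict y x : anc y x -> y != x -> anc y (par x).
Proof.
move=> a ne; apply: (anc_chain a (anc_par x)).
case: (posnP (depth x)) => H.
  by move: (anc_depth a); rewrite H leqn0 => /eqP e; rewrite depth_par H e.
rewrite depth_par; have := anc_depth a; rewrite leq_eqVlt => /orP [/eqP e|].
  by move: ne; rewrite (anc_eq a) ?e ?eqxx.
by case: (depth x) H.
Qed.

Lemma up_path x n : n <= depth x -> path t x (traject par (par x) n).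
Proof.
elim: n x => [|n IH] x H //=.
rewrite IH ?andbT; last by rewrite depth_par; case: (depth x) H.
by rewrite tsym par_t //; case: (depth x) H.
Qed.

Lemma traject_lt x n y : 0 < depth x -> y \in traject par (par x) n -> depth y < depth x.
Proof.
move=> H /trajectP [i _ ->]; rewrite -iterSr depth_iter; lia.
Qed.

Lemma traject_uniq x n : n <= (depth x).+1 -> uniq (traject par x n).
Proof.
elim: n x => [|n IH] x H //; rewrite trajectS /=.
case: n IH H => [|n] IH H //.
have dx : 0 < depth x by lia.
apply/andP; split.
  by apply/negP => /(traject_lt dx); rewrite ltnn.
apply: IH; rewrite depth_par; lia.
Qed.

Lemma belast_traject (x : I) n : belast x (traject par (par x) n) = traject par x n.
Proof.
elim: n x => [|n IH] x //=; by rewrite IH.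
Qed.

Lemma last_rev_traject x m : last (iter m par x) (rev (traject par x m)) = x.
Proof.
case: m => [|m] //=; by rewrite rev_cons last_rcons.
Qed.

Lemma path_chain x y z : anc y x -> anc z y -> on_tree_path t x y z.
Proof.
move=> ayx azy; have azx := anc_trans azy ayx.
set n := depth x - depth z.
exists (traject par (par x) n); split.
- by apply: up_path; rewrite /n leq_subr.
- rewrite last_traject; by case/andP: azx => _ /eqP.
- rewrite -trajectS; apply: traject_uniq; rewrite /n; lia.
- rewrite -trajectS; apply/trajectP; exists (depth x - depth y).
    have := anc_depth azy; have := anc_depth ayx; rewrite /n; lia.
  by case/andP: ayx => _ /eqP.
Qed.

Lemma path_updown z x : ~~ anc z x -> on_tree_path t z (par z) x.
Proof.
move=> nzx.
pose C := [pred u | anc u z && anc u x].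
have Cr : C r by rewrite /= !anc_r.
case: (@arg_maxnP _ r C depth Cr) => w /andP [awz awx] wmax.
set n := depth z - depth w; set m := depth x - depth w.
have ez : iter n par z = w by case/andP: awz => _ /eqP.
have ex : iter m par x = w by case/andP: awx => _ /eqP.
have wz : w != z by apply: contraNneq nzx => <-.
have dwz : depth w < depth z.
  rewrite ltn_neqAle anc_depth // andbT; apply: contra wz => /eqP e.
  by rewrite (anc_eq awz) ?e.
exists (traject par (par z) n ++ rev (traject par x m)); split.
- rewrite cat_path up_path ?leq_subr //= last_traject ez -ex.
  rewrite -[X in rev X](belast_traject x m) -{1}(last_traject par x m) rev_path.
  rewrite (@eq_path _ _ t); first by apply: up_path; rewrite /m leq_subr.
  by move=> a b; rewrite tsym.
- by rewrite last_cat last_traject ez -ex last_rev_traject.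
- rewrite -cat_cons -trajectS cat_uniq rev_uniq !traject_uniq; last 2 first.
  + rewrite /m; lia.
  + rewrite /n; lia.
  rewrite andbT /=; apply/hasPn => a; rewrite mem_rev => /trajectP [i im ->].
  rewrite -trajectS; apply/negP => /trajectP [j jn ej].
  have : C (iter i par x).
    rewrite /=; apply/andP; split; apply/ancP; [exists j; by rewrite ej | by exists i].
  move/wmax; rewrite depth_iter; rewrite /m in im; lia.
- rewrite inE mem_cat; apply/orP; right; apply/orP; left; apply/trajectP; exists 0 => //; rewrite /n; lia.
Qed.

End Rooted.

Section Layout.
Variables (I : finType) (t : rel I) (r : I).
Hypothesis tsym : symmetric t.
Hypothesis tconn : forall x, connect t r x.

Local Notation depth := (depth tconn).
Local Notation par := (par tconn).
Local Notation anc := (anc tconn).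

Local Open Scope R_scope.

Definition NN := INR #|I|.
Definition code (x : I) := INR (enum_rank x).

Lemma code_ge0 x : 0 <= code x.
Proof. apply: pos_INR. Qed.

Lemma code_lt x : code x + 1 <= NN.
Proof.
rewrite /code /NN -S_INR; apply: le_INR; apply/leP; exact: ltn_ord.
Qed.

Fixpoint lay (n : nat) (x : I) : R * R :=
  match n with
  | O => (0, 1)
  | S n' => let l := fst (lay n' (par x)) in let h := snd (lay n' (par x)) in
      (l + (h - l) / 2 + (h - l) / (4 * NN) * (2 * code x),
       l + (h - l) / 2 + (h - l) / (4 * NN) * (2 * code x + 1))
  end.

Definition Lo x := fst (lay (depth x) x).
Definition Hi x := snd (lay (depth x) x).
Definition Mid x := (Lo x + Hi x) / 2.

Lemma lay_par x : (0 < depth x)%N ->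
  Lo x = Lo (par x) + (Hi (par x) - Lo (par x)) / 2 +
     (Hi (par x) - Lo (par x)) / (4 * NN) * (2 * code x) /\
  Hi x = Lo (par x) + (Hi (par x) - Lo (par x)) / 2 +
     (Hi (par x) - Lo (par x)) / (4 * NN) * (2 * code x + 1).
Proof.
move=> H; rewrite /Lo /Hi; have := depth_par tconn x.
case: (depth x) H => // n _ /= ->; by split.
Qed.

Lemma NN_pos : 0 < NN.
Proof. have := code_lt r; have := code_ge0 r; lra. Qed.

Lemma LoHi x : Lo x < Hi x.
Proof.
move: {2}(depth x) (erefl (depth x)) => n; elim: n x => [|n IH] x E.
  by rewrite /Lo /Hi E /=; lra.
have H : (0 < depth x)%N by rewrite E.
have [-> ->] := lay_par H.
have := IH (par x); rewrite depth_par E => /(_ erefl) h.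
have w : 0 < (Hi (par x) - Lo (par x)) / (4 * NN).
  apply: Rdiv_lt_0_compat; have := NN_pos; lra.
lra.
Qed.

Lemma child x : (0 < depth x)%N -> Mid (par x) <= Lo x /\ Hi x <= Hi (par x).
Proof.
move=> H; have [-> ->] := lay_par H; rewrite /Mid.
have := LoHi (par x); have := code_ge0 x; have := code_lt x; have := NN_pos.
set a := Lo (par x); set b := Hi (par x); set c := code x; set N := NN.
move=> hN hc hc0 hab.
have w : 0 < (b - a) / (4 * N) by apply: Rdiv_lt_0_compat; lra.
have e : (b - a) / (4 * N) * (2 * N) = (b - a) / 2 by field; lra.
split.
  have : 0 <= (b - a) / (4 * N) * (2 * c) by apply: Rmult_le_pos; lra.
  lra.
have : (b - a) / (4 * N) * (2 * c + 1) <= (b - a) / (4 * N) * (2 * N).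
  apply: Rmult_le_compat_l; lra.
lra.
Qed.

Lemma sib x y : (0 < depth x)%N -> (0 < depth y)%N -> par x = par y -> x <> y ->
  Hi x < Lo y \/ Hi y < Lo x.
Proof.
move=> hx hy pxy nxy.
have cne : (enum_rank x != enum_rank y)%N.
  by apply/eqP => /enum_rank_inj.
have key : forall u v, (0 < depth u)%N -> (0 < depth v)%N -> par u = par v ->
    (enum_rank u < enum_rank v)%N -> Hi u < Lo v.
  move=> u v hu hv puv lt.
  have [_ ->] := lay_par hu; have [-> _] := lay_par hv; rewrite puv.
  have := LoHi (par v); have := NN_pos.
  have : code u + 1 <= code v.
    rewrite /code -S_INR; apply: le_INR; exact/leP.
  set a := Lo (par v); set b := Hi (par v); set N := NN.
  move=> hc hN hab.
  have w : 0 < (b - a) / (4 * N) by apply: Rdiv_lt_0_compat; lra.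
  have : (b - a) / (4 * N) * (2 * code u + 1) < (b - a) / (4 * N) * (2 * code v).
    apply: Rmult_lt_compat_l; lra.
  lra.
case: (ltngtP (enum_rank x) (enum_rank y)) => h.
- by left; apply: key.
- by right; apply: key.
- by exfalso; apply: nxy; apply: enum_rank_inj; apply: val_inj.
Qed.

Lemma LoMid x : Lo x < Mid x.
Proof. have := LoHi x; rewrite /Mid; lra. Qed.
Lemma MidHi x : Mid x < Hi x.
Proof. have := LoHi x; rewrite /Mid; lra. Qed.

Lemma anc_LH y x : anc y x -> Lo y <= Lo x /\ Hi x <= Hi y.
Proof.
move=> /ancP [n <-]; elim: n => [|n IH] /=; first by lra.
set z := iter n par x in IH *.
case: (posnP (depth z)) => H; first by rewrite par0.
have := child H; have := LoMid (par z); lra.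
Qed.

Lemma anc_strict_L y x : anc y x -> y <> x -> Mid y <= Lo x.
Proof.
move=> /ancP [n]; case: n => [|n]; first by move=> /= ->.
elim: n x => [|n IH] x.
  move=> /= <- ne; case: (posnP (depth x)) => H; first by move: ne; rewrite par0.
  by case: (child H).
move=> E ne; case: (posnP (depth x)) => H.
  apply: IH => //; by rewrite iterSr par0 // in E.
case: (child H) => h1 _.
case: (eqVneq y (par x)) => [->|/eqP ne2]; first done.
have := IH (par x); rewrite -iterSr E => /(_ erefl ne2).
have := LoMid (par x); lra.
Qed.

Lemma incomp_disj x y : ~~ anc x y -> ~~ anc y x -> Hi x < Lo y \/ Hi y < Lo x.
Proof.
move=> nxy nyx.
pose C := [pred u | anc u x && anc u y].
have Cr : C r by rewrite /= !anc_r.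
case: (@arg_maxnP _ r C depth Cr) => w /andP [awx awy] wmax.
have chd : forall z, anc w z -> ~~ anc z w ->
   exists z', [/\ anc z' z, (0 < depth z')%N & par z' = w].
  move=> z awz nzw.
  have dd : (depth w < depth z)%N.
    rewrite ltnNge; apply/negP => h; move: nzw; by rewrite (anc_eq awz h) anc_refl.
  exists (iter (depth z - depth w).-1 par z); split.
  - by apply/ancP; eexists.
  - rewrite depth_iter; lia.
  - rewrite -iterS prednK; last by lia.
    by case/andP: awz => _ /eqP.
have nxw : ~~ anc x w by apply: contra nxy => h; exact: anc_trans h awy.
have nyw : ~~ anc y w by apply: contra nyx => h; exact: anc_trans h awx.
have [x' [ax' dx' px']] := chd x awx nxw.
have [y' [ay' dy' py']] := chd y awy nyw.
have ne : x' <> y'.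
  move=> e; subst y'.
  have : C x' by rewrite /= ax' ay'.
  move/wmax; rewrite -px' depth_par; lia.
have [hx1 hx2] := anc_LH ax'; have [hy1 hy2] := anc_LH ay'.
have := LoHi x; have := LoHi y.
case: (sib dx' dy' (etrans px' (esym py')) ne); lra.
Qed.

End Layout.

Section Decomp.
Variables (T I : finType) (e : rel T) (t : rel I) (X : I -> {set T}) (r : I).
Hypothesis tsym : symmetric t.
Hypothesis tconn : forall x, connect t r x.
Hypothesis cover : forall v, exists i, v \in X i.
Hypothesis hpath : forall i j k, on_tree_path t i j k -> X i :&: X k \subset X j.

Local Notation depth := (depth tconn).
Local Notation par := (par tconn).
Local Notation anc := (anc tconn).

Definition top v := [arg min_(i < odflt r [pick i | v \in X i] | v \in X i) depth i].

Lemma top_spec v : v \in X (top v) /\ forall i, v \in X i -> depth (top v) <= depth i.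
Proof.
have [i0 hi0] := cover v; rewrite /top; case: pickP => [j hj | none] /=.
  by case: arg_minnP => // m hm H; split => // i /H.
by rewrite none in hi0.
Qed.

Lemma top_in v : v \in X (top v).
Proof. by case: (top_spec v). Qed.

Lemma on_path_in i j k v : on_tree_path t i j k -> v \in X i -> v \in X k -> v \in X j.
Proof.
move=> /hpath /subsetP H a b; apply: H; by rewrite inE a b.
Qed.

Lemma top_anc v i : v \in X i -> anc (top v) i.
Proof.
move=> vi; apply/idPn => h.
have := on_path_in (path_updown tsym h) (top_in v) vi.
case: (top_spec v) => _ H /H; rewrite depth_par => h2.
case: (posnP (depth (top v))) => [/depth0 E|h3]; last by lia.
by move: h; rewrite E anc_r.
Qed.

Lemma chain_in v i y : v \in X i -> anc y i -> anc (top v) y -> v \in X y.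
Proof.
move=> vi ayi aty; exact: on_path_in (path_chain tsym ayi aty) vi (top_in v).
Qed.

Lemma shared_in u w i : u \in X i -> w \in X i -> depth (top u) <= depth (top w) ->
  u \in X (top w).
Proof.
move=> ui wi d; apply: (chain_in ui (top_anc wi)).
exact: anc_chain (top_anc ui) (top_anc wi) d.
Qed.

Definition kk := \max_(i : I) #|X i|.

Definition properc (col : T -> 'I_kk) :=
  forall u w i, u != w -> u \in X i -> w \in X i -> col u != col w.

Lemma color_ex : 0 < kk -> exists col : T -> 'I_kk, properc col.
Proof.
move=> kpos.
suff H : forall n (S : {set T}), #|S| <= n -> exists col : T -> 'I_kk,
   forall u w i, u \in S -> w \in S -> u != w -> u \in X i -> w \in X i -> col u != col w.
  have [col Hc] := H _ [set: T] (leqnn _); exists col => u w i ne ui wi.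
  by apply: (Hc u w i); rewrite ?inE.
elim=> [|n IH] S hS.
  exists (fun _ => Ordinal kpos) => u w i uS.
  by move: hS; rewrite leqn0 => /eqP /cards0_eq E; rewrite E inE in uS.
case: (set_0Vmem S) => [->|[v0 v0S]].
  exists (fun _ => Ordinal kpos) => u w i; by rewrite inE.
case: (@arg_maxnP _ v0 (mem S) (fun v => depth (top v)) v0S) => v vS0 vmax.
have vS : v \in S := vS0.
have [c Hc] : exists c : T -> 'I_kk, forall u w i, u \in S :\ v -> w \in S :\ v ->
    u != w -> u \in X i -> w \in X i -> c u != c w.
  apply: IH; move: hS; rewrite (cardsD1 v S) vS; by rewrite add1n ltnS.
pose bad := [set c u | u in X (top v) :\ v].
have cb : #|bad| < kk.
  apply: (leq_ltn_trans (leq_imset_card _ _)).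
  have := cardsD1 v (X (top v)); rewrite top_in add1n => E.
  have : #|X (top v)| <= kk by apply: (leq_bigmax (top v)).
  by rewrite E.
have [a abad] : exists a, a \notin bad.
  case: (set_0Vmem (~: bad)) => [E|[a]]; last by rewrite inE; exists a.
  by move: cb; have := cardsC bad; rewrite E cards0 addn0 card_ord => ->; rewrite ltnn.
exists (fun u => if u == v then a else c u) => u w i uS wS ne ui wi.
have key : forall w, w \in S -> w != v -> w \in X i -> v \in X i -> a != c w.
  move=> x xS xv xi vi; apply: contraNneq abad => ->.
  rewrite /bad; apply: imset_f; rewrite !inE xv /=.
  by apply: shared_in xi vi (vmax x xS).
case: (eqVneq u v) => [eu|nu]; case: (eqVneq w v) => [ew|nw].
- by move: ne; rewrite eu ew eqxx.
- by subst u; apply: key.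
- by subst w; rewrite eq_sym; apply: key.
- apply: (Hc u w i) => //; by rewrite !inE ?nu ?nw ?uS ?wS.
Qed.


Hypothesis esym : symmetric e.
Hypothesis hedge : forall u v, e u v -> exists i, (u \in X i) && (v \in X i).
Variable col : T -> 'I_kk.
Hypothesis colP : properc col.

Local Notation tp := top.
Local Notation Lo := (Lo tconn).
Local Notation Hi := (Hi tconn).
Local Notation Mid := (Mid tconn).

Definition pk v (j : 'I_kk) := [pick a in X (tp v) | col a == j].

Lemma pk_some v j a : pk v j = Some a -> a \in X (tp v) /\ col a = j.
Proof. by rewrite /pk; case: pickP => // b /andP [h /eqP c] [<-]. Qed.

Lemma pk_eq v j w : w \in X (tp v) -> col w = j -> pk v j = Some w.
Proof.
move=> hw cw; rewrite /pk; case: pickP => [a /andP [ha /eqP ca] | none].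
  congr Some; apply/eqP; apply/negPn/negP => ne.
  by have := colP ne ha hw; rewrite ca cw eqxx.
by have := none w; rewrite hw cw eqxx.
Qed.

Lemma col_ne u v : e u v -> u != v -> col u != col v.
Proof.
move=> euv ne; have [i /andP [ui vi]] := hedge euv; exact: colP ne ui vi.
Qed.

Local Open Scope R_scope.

Definition loj (j : 'I_kk) v : R :=
  if col v == j then Lo (tp v) else
  match pk v j with
  | Some a => if e a v then Lo (tp a) else Mid (tp v)
  | None => Mid (tp v)
  end.
Definition hij (j : 'I_kk) v : R := if col v == j then Lo (tp v) else Hi (tp v).

Definition ov (l h : T -> R) u v := l u <= h v /\ l v <= h u.

Lemma ov_sym l h u v : ov l h u v -> ov l h v u.
Proof. by case. Qed.

Lemma loj_le j v : col v != j -> loj j v <= Mid (tp v).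
Proof.
move=> /negbTE cv; rewrite /loj cv.
case E: (pk v j) => [a|]; last by lra.
case: (e a v); last by lra.
have [ha _] := pk_some E.
have [h1 _] := anc_LH (top_anc ha).
have := LoMid tconn (tp v); lra.
Qed.

Lemma lohi_j j v : loj j v <= hij j v.
Proof.
case: (eqVneq (col v) j) => [c|c].
  by rewrite /loj /hij c eqxx; lra.
have := loj_le c; have := MidHi tconn (tp v); rewrite /hij (negbTE c); lra.
Qed.

Lemma E1a j u v : e u v -> u != v -> col u = j -> ov (loj j) (hij j) u v.
Proof.
move=> euv ne cu.
have cv : col v != j by rewrite -cu eq_sym col_ne.
have [i /andP [ui vi]] := hedge euv.
rewrite /ov /hij /loj cu eqxx (negbTE cv).
have := LoHi tconn (tp u); have := LoHi tconn (tp v).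
have := LoMid tconn (tp v); have := loj_le cv; rewrite /loj (negbTE cv) => hl.
case/orP: (anc_cmp (top_anc ui) (top_anc vi)) => a.
- have uv : u \in X (tp v).
    by apply: (chain_in ui (top_anc vi) a).
  rewrite (pk_eq uv cu) euv.
  have [h1 h2] := anc_LH a; lra.
- case: (eqVneq (tp v) (tp u)) => [E|nE].
    have uv : u \in X (tp v) by rewrite E top_in.
    rewrite (pk_eq uv cu) euv.
    rewrite E; lra.
  have h := anc_strict_L a (elimN eqP nE).
  have [h1 h2] := anc_LH a; lra.
Qed.

Lemma E1 j u v : e u v -> u != v -> ov (loj j) (hij j) u v.
Proof.
move=> euv ne.
case: (eqVneq (col u) j) => [cu|cu]; first exact: E1a.
case: (eqVneq (col v) j) => [cv|cv].
  by apply: ov_sym; apply: E1a => //; rewrite 1?esym // eq_sym.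
have [i /andP [ui vi]] := hedge euv.
have lu := loj_le cu; have lv := loj_le cv.
rewrite /ov /hij (negbTE cu) (negbTE cv).
have := LoMid tconn (tp u); have := MidHi tconn (tp u).
have := LoMid tconn (tp v); have := MidHi tconn (tp v).
case/orP: (anc_cmp (top_anc ui) (top_anc vi)) => a.
- have [h1 h2] := anc_LH a.
  case: (eqVneq (tp u) (tp v)) => [E|nE]; first by rewrite E in lu *; lra.
  have := anc_strict_L a (elimN eqP nE); lra.
- have [h1 h2] := anc_LH a.
  case: (eqVneq (tp v) (tp u)) => [E|nE]; first by rewrite E in lv *; lra.
  have := anc_strict_L a (elimN eqP nE); lra.
Qed.

Lemma E2 j u v : ~~ e u v -> u != v -> anc (tp u) (tp v) -> col u = j ->
  ~ ov (loj j) (hij j) u v.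
Proof.
move=> neuv ne a cu [o1 o2]; move: o1 o2.
rewrite /hij /loj cu eqxx.
have [h1 h2] := anc_LH a.
have := LoMid tconn (tp u); have := LoMid tconn (tp v).
case: (eqVneq (col v) j) => [cv|cv].
- move=> _ m1 o1 o2.
  case: (eqVneq (tp u) (tp v)) => [E|nE].
    have uv : u \in X (tp v) by rewrite -E top_in.
    by have := colP ne uv (top_in v); rewrite cu cv eqxx.
  have := anc_strict_L a (elimN eqP nE); lra.
- move=> m2 m1 o1 o2.
  case E: (pk v j) o2 => [b|]; last by lra.
  have [hb cb] := pk_some E.
  case eb: (e b v); last by lra.
  move=> o2.
  have ab := top_anc hb.
  case/orP: (anc_cmp ab a) => a2.
  + have bu : b \in X (tp u) by apply: (chain_in hb a a2).
    case: (eqVneq b u) => [ebu|nbu]; first by move: neuv; rewrite -ebu eb.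
    by have := colP nbu bu (top_in u); rewrite cb cu eqxx.
  + case: (eqVneq (tp u) (tp b)) => [E2|nE].
      have bu : b \in X (tp u) by rewrite E2 top_in.
      case: (eqVneq b u) => [ebu|nbu]; first by move: neuv; rewrite -ebu eb.
      by have := colP nbu bu (top_in u); rewrite cb cu eqxx.
    have := anc_strict_L a2 (elimN eqP nE); lra.
Qed.


Definition lof v (i : 'I_kk.+1) : R :=
  match unlift ord0 i with None => Lo (tp v) | Some j => loj j v end.
Definition hif v (i : 'I_kk.+1) : R :=
  match unlift ord0 i with None => Hi (tp v) | Some j => hij j v end.

Lemma box_col : box_rep e kk.+1.
Proof.
exists lof, hif; split.
  move=> v i; rewrite /lof /hif; case: (unlift ord0 i) => [j|].
    exact: lohi_j.
  apply: Rlt_le; exact: LoHi.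
move=> u v /eqP ne; split.
  move=> euv i; rewrite /lof /hif; case: (unlift ord0 i) => [j|].
    exact: E1.
  have [k /andP [uk vk]] := hedge euv.
  have := LoHi tconn (tp u); have := LoHi tconn (tp v).
  case/orP: (anc_cmp (top_anc uk) (top_anc vk)) => a; have [h1 h2] := anc_LH a; lra.
move=> H; apply/idPn => neuv.
have H0 := H ord0; rewrite /lof /hif unlift_none in H0.
have cmp : anc (tp u) (tp v) || anc (tp v) (tp u).
  apply/idPn; rewrite negb_or => /andP [n1 n2].
  have := LoHi tconn (tp u); have := LoHi tconn (tp v).
  case: (incomp_disj n1 n2); lra.
case/orP: cmp => a.
  have := H (lift ord0 (col u)); rewrite /lof /hif liftK.
  by move=> o; exact: (E2 neuv ne a erefl o).
have := H (lift ord0 (col v)); rewrite /lof /hif liftK => o.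
apply: (E2 (j := col v) (u := v) (v := u)) => //.
- by rewrite esym.
- by rewrite eq_sym.
- by case: o.
Qed.

End Decomp.

Lemma box_td (T I : finType) (e : rel T) (t : rel I) (X : I -> {set T}) :
  symmetric e -> tree_decomposition e t X -> box_rep e (kk X).+1.
Proof.
move=> esym [[_ [tsym [_ [tconn _]]]] cover hedge hpath].
case: (pickP (fun _ : T => true)) => [v0 _ | none].
  have [r _] := cover v0.
  have tc : forall x, connect t r x by move=> x; apply: tconn.
  have kpos : (0 < kk X)%N.
    have [i vi] := cover v0.
    apply: (@leq_trans #|X i|); first by apply/card_gt0P; exists v0.
    exact: (leq_bigmax i).
  have [col colP] := color_ex tsym tc cover hpath kpos.
  exact: (box_col tsym tc cover hpath esym hedge colP).
exists (fun _ _ => R0), (fun _ _ => R0); split.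
  move=> *; exact: Rle_refl.
by move=> u; have := none u.
Qed.



Lemma ex_min_prop (P : nat -> Prop) :
  (exists n, P n) -> exists n, P n /\ forall m, P m -> (n <= m)%N.
Proof.
move=> [n0 Pn0]; apply: NNPP => Hno.
suff H : forall n m, (m <= n)%N -> ~ P m by exact: (H n0 n0 (leqnn _) Pn0).
elim=> [|n IH] m hm Pm.
  move: hm; rewrite leqn0 => /eqP E; subst m.
  by apply: Hno; exists 0%N; split.
case: (leqP m n) => h; first exact: (IH m h Pm).
have E : m = n.+1 by apply/eqP; rewrite eqn_leq hm h.
subst m; apply: Hno; exists n.+1; split => // m' Pm'.
by rewrite ltnNge; apply/negP => h'; exact: (IH m' h' Pm').
Qed.

Lemma unit_td (T : finType) (e : rel T) :
  tree_decomposition e (fun _ _ : unit => false) (fun _ => [set: T]).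
Proof.
split.
- split; first by rewrite card_unit.
  split; first by [].
  split; first by [].
  split; first by move=> [] []; exact: connect0.
  move=> x [|a [|b p]] //= _; by case: x; case: a; case: b.
- by move=> v; exists tt; rewrite inE.
- by move=> u v _; exists tt; rewrite !inE.
- by move=> i j k _; apply: subsetT.
Qed.

Theorem theorem2 (T : finType) (e : rel T) :
  simple_graph e ->
  exists (bx : nat) (tw : int),
    [/\ is_boxicity e bx, is_treewidth e tw & (Posz bx <= tw + 2)%R].
Proof.
move=> [esym _].
pose Ptw k := exists (I : finType) (t : rel I) (X : I -> {set T}),
  tree_decomposition e t X /\ (\max_(i : I) #|X i|)%N = k.
have [k0 [[I [t [X [td Ek]]]] kmin]] : exists n, Ptw n /\ forall m, Ptw m -> (n <= m)%N.
  apply: ex_min_prop; exists (\max_(i : unit) #|[set: T]|)%N.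
  exists unit, (fun _ _ => false), (fun _ => [set: T]); split => //.
  exact: unit_td.
have bt : box_rep e k0.+1 by rewrite -Ek; exact: (box_td esym td).
have [bx [bb bmin]] := ex_min_prop (ex_intro _ _ bt).
have bk := bmin _ bt.
exists bx, (Posz k0 - 1)%R; split.
- by split.
- split.
    exists I, t, X; split => //; by rewrite /td_width Ek.
  move=> I' t' X' td'; rewrite /td_width.
  have := kmin (\max_(i : I') #|X' i|)%N.
  have h : Ptw (\max_(i : I') #|X' i|)%N by exists I', t', X'.
  move=> /(_ h) hk; lia.
- lia.
Qed.
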